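(* Let $n \geqslant 19$ be an integer, and let $T_n$ be the Transposition graph, i.e. the Cayley graph $\mathrm{Cay}(\mathrm{Sym}_n, T)$ where $T$ is the set of all transpositions of $\mathrm{Sym}_n$. Then every integer $m$ with $-\frac{n-4}{2} \leqslant m \leqslant \frac{n-4}{2}$ is an eigenvalue of (the adjacency matrix of) $T_n$.
   Context: $\mathrm{Sym}_n$ is the symmetric group on $n$ letters. The Cayley graph $\mathrm{Cay}(G,S)$ has vertex set $G$, with $g$ adjacent to $gs$ for $s\in S$. The spectrum of $T_n$ is the set of eigenvalues of its adjacency matrix. *)

(* Defs.v *)
From mathcomp Require Import all_boot all_order all_algebra all_fingroup all_field.
Set Implicit Arguments. Unset Strict Implicit. Unset Printing Implicit Defensive.
Import GRing.Theory Num.Theory.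
Local Open Scope ring_scope.

Definition transpositions (n : nat) : {set {perm 'I_n}} :=
  [set s | [exists x : 'I_n, exists y : 'I_n, (x != y) && (s == tperm x y)]].

Definition transp_adj (n : nat) (g h : {perm 'I_n}) : bool :=
  [exists s in transpositions n, h == (g * s)%g].

Definition transp_adjmx (n : nat) : 'M[algC]_(#|{perm 'I_n}|) :=
  \matrix_(i, j) (transp_adj (enum_val i) (enum_val j))%:R.

(* Main.v *)
Require Import Defs.
From mathcomp Require Import all_boot all_order all_algebra all_fingroup all_field.
From mathcomp Require Import zify.
Set Implicit Arguments. Unset Strict Implicit. Unset Printing Implicit Defensive.
Import GRing.Theory Num.Theory.

Definition arm (i a : nat) := [seq (i, i + j) | j <- iota 0 a.+1].
Definition leg (i b : nat) := [seq (i + k.+1, i) | k <- iota 0 b].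

Arguments arm : simpl never.
Arguments leg : simpl never.

Fixpoint cells_from (i : nat) (hs : seq (nat * nat)) : seq (nat * nat) :=
  if hs is h :: t then arm i h.1 ++ leg i h.2 ++ cells_from i.+1 t else [::].

Fixpoint decr (hs : seq (nat * nat)) : bool :=
  match hs with
  | h1 :: ((h2 :: _) as t) => [&& h2.1 < h1.1, h2.2 < h1.2 & decr t]
  | _ => true
  end.

Fixpoint fsize (hs : seq (nat * nat)) : nat :=
  if hs is h :: t then h.1 + h.2 + 1 + fsize t else 0.

Fixpoint fcont (hs : seq (nat * nat)) : int :=
  if hs is h :: t then ('C(h.1.+1, 2)%:Z - 'C(h.2.+1, 2)%:Z + fcont t)%R else 0%R.

Lemma cells_cons i h t : cells_from i (h :: t) = arm i h.1 ++ leg i h.2 ++ cells_from i.+1 t.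
Proof. by []. Qed.

Lemma mem_arm i a r c : ((r, c) \in arm i a) = (r == i) && (i <= c <= i + a).
Proof.
apply/mapP/idP => [[j]|/andP[/eqP-> /andP[ic ca]]].
  by rewrite mem_iota => /andP[_ ja] [-> ->]; rewrite eqxx /=; lia.
by exists (c - i); [rewrite mem_iota; lia | congr pair; lia].
Qed.

Lemma mem_leg i b r c : ((r, c) \in leg i b) = (c == i) && (i < r <= i + b).
Proof.
apply/mapP/idP => [[j]|/andP[/eqP-> /andP[ic ca]]].
  by rewrite mem_iota => /andP[_ ja] [-> ->]; rewrite eqxx /=; lia.
by exists (r - i).-1; [rewrite mem_iota; lia | congr pair; lia].
Qed.

Definition hcond (hs : seq (nat * nat)) i r c k :=
  (k < size hs) && (((r == i + k) && (i + k <= c <= i + k + (nth (0,0) hs k).1)) ||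
                    ((c == i + k) && (i + k < r <= i + k + (nth (0,0) hs k).2))).

Lemma cellsP i hs r c :
  reflect (exists k, hcond hs i r c k) ((r, c) \in cells_from i hs).
Proof.
elim: hs i => [|h t IH] i.
  by rewrite in_nil; constructor => -[k]; rewrite /hcond.
rewrite cells_cons !mem_cat mem_arm mem_leg.
apply: (iffP idP).
  case/orP => [H|/orP[H|/IH[k Hk]]].
  - by exists 0; rewrite /hcond /= addn0 H.
  - by exists 0; rewrite /hcond /= addn0 H orbT.
  - exists k.+1; move: Hk; rewrite /hcond /= !addnS !addSn.
    by rewrite -!(addSn i k) ltnS.
case=> -[|k]; rewrite /hcond /= ?addn0.
  by case/orP => ->; rewrite ?orbT.
rewrite ltnS => /andP[kt H]; apply/orP; right; apply/orP; right.
apply/IH; exists k; rewrite /hcond kt /=.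
by move: H; rewrite !addnS !addSn.
Qed.

Lemma cells_ge i hs r c : (r, c) \in cells_from i hs -> i <= r /\ i <= c.
Proof.
move/cellsP=> [k]; rewrite /hcond => /andP[_ /orP[]] /andP[/eqP-> H]; lia.
Qed.

Lemma uniq_cells i hs : uniq (cells_from i hs).
Proof.
elim: hs i => [|h t IH] i //.
rewrite cells_cons !cat_uniq IH andbT.
rewrite map_inj_uniq ?iota_uniq /=; last by move=> x y [] /eqP; rewrite eqn_add2l => /eqP.
rewrite map_inj_uniq ?iota_uniq /=; last by move=> x y [] /eqP; rewrite eqn_add2l => /eqP [].
apply/andP; split.
  apply/hasPn => -[r c]; rewrite mem_cat => /orP[]; last first.
    by move/cells_ge => H; rewrite mem_arm; lia.
  by rewrite mem_leg mem_arm; lia.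
by apply/hasPn => -[r c] /cells_ge H; rewrite mem_leg; lia.
Qed.

Lemma size_cells i hs : size (cells_from i hs) = fsize hs.
Proof.
elim: hs i => [|h t IH] i //.
by rewrite cells_cons !size_cat !size_map !size_iota IH /=; lia.
Qed.

Lemma decr_nth hs : decr hs -> forall k, k.+1 < size hs ->
  (nth (0,0) hs k.+1).1 < (nth (0,0) hs k).1 /\ (nth (0,0) hs k.+1).2 < (nth (0,0) hs k).2.
Proof.
elim: hs => [|h t IH] //=; case: t IH => [|h2 t] IH //= /and3P[a b d] [|k] /=.
  by move=> _; split.
by rewrite ltnS => kt; apply: IH.
Qed.

Lemma decr_mono hs : decr hs -> forall i j, i <= j -> j < size hs ->
  (nth (0,0) hs j).1 + (j - i) <= (nth (0,0) hs i).1 /\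
  (nth (0,0) hs j).2 + (j - i) <= (nth (0,0) hs i).2.
Proof.
move=> d i j; elim: j => [|j IH] ij js.
  have -> : i = 0 by lia.
  by rewrite sub0n !addn0.
case: (eqVneq i j.+1) => [->|ne]; first by rewrite subnn !addn0.
have [h1 h2] := decr_nth d js.
have [h3 h4] := IH (ltac:(lia)) (ltac:(lia)).
lia.
Qed.

Lemma cells_down hs : decr hs -> forall r c r' c', (r, c) \in cells_from 0 hs ->
  r' <= r -> c' <= c -> (r', c') \in cells_from 0 hs.
Proof.
move=> d r c r' c' /cellsP[k]; rewrite /hcond add0n => /andP[ks H] rr cc.
apply/cellsP; rewrite /hcond.
case: (leqP r' c') => rc.
  have rk : r' <= k by lia.
  have [m1 m2] := decr_mono d rk ks.
  exists r'; rewrite add0n (leq_ltn_trans rk ks) /=; lia.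
have ck : c' <= k by lia.
have [m1 m2] := decr_mono d ck ks.
exists c'; rewrite add0n (leq_ltn_trans ck ks) /=; lia.
Qed.


Lemma bin_shift y : 'C((y + 2).+1, 2) = 'C(y.+1, 2) + 2 * y + 3.
Proof. rewrite !addn2 binS bin1 binS bin1; lia. Qed.

Lemma C12 : 'C(1, 2) = 0. Proof. by []. Qed.
Lemma C22 : 'C(2, 2) = 1. Proof. by []. Qed.
Lemma C32 : 'C(3, 2) = 3. Proof. by []. Qed.
Lemma C42 : 'C(4, 2) = 6. Proof. by []. Qed.
Lemma C52 : 'C(5, 2) = 10. Proof. by []. Qed.

Ltac solve_hs := rewrite /= ?bin_shift ?C12 ?C22 ?C32 ?C42 ?C52; lia.

Lemma exists_hooks_nat (n k : nat) : 19 <= n -> 2 * k + 4 <= n ->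
  exists hs, [/\ decr hs, fsize hs = n & fcont hs = Posz k].
Proof.
move=> n19 kn.
have ek := odd_double_half k; have en := odd_double_half n.
set q := k./2 in ek; set p := n./2 in en.
rewrite -!muln2 in ek en.
case ok: (odd k) ek => /= ek; case on: (odd n) en => /= en.
-
  case: (ltngtP q 1) => [q0|q2|q1].
  + have q00 : q = 0 by lia.
    exists [:: (p - 1, p - 1); (1, 0)]; split; solve_hs.
  + exists [:: (p - q - 1, p - q - 1); (q - 1 + 2, q - 1); (0, 0)]; split; solve_hs.
  + exists [:: (p - 3, p - 3); (2, 1); (1, 0)]; split; solve_hs.
-
  case: (posnP q) => [q0|qpos].
  + exists [:: (p - 4, p - 4); (2, 2); (1, 0)]; split; solve_hs.
  + exists [:: (p - q - 1, p - q - 1); (q - 1 + 2, q - 1)]; split; solve_hs.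
-
  case: (leqP 4 q) => [q4|q3].
  + exists [:: (p - q, p - q); (q - 3 + 2, q - 3); (2, 0)]; split; solve_hs.
  + have : q = 0 \/ q = 1 \/ q = 2 \/ q = 3 by lia.
    case=> [q0|[q1|[q2|q3']]].
    * exists [:: (p, p)]; split; solve_hs.
    * exists [:: (p - 2, p - 2); (2, 1)]; split; solve_hs.
    * exists [:: (p - 4, p - 4); (3, 2); (1, 0)]; split; solve_hs.
    * exists [:: (p - 2, p - 2); (3, 0)]; split; solve_hs.
-
  case: (leqP 3 q) => [q3|q2].
  + exists [:: (p - q - 1, p - q - 1); (q - 2 + 2, q - 2); (1, 0)]; split; solve_hs.
  + have : q = 0 \/ q = 1 \/ q = 2 by lia.
    case=> [q0|[q1|q2']].
    * exists [:: (p - 1, p - 1); (0, 0)]; split; solve_hs.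
    * exists [:: (p - 3, p - 3); (2, 1); (0, 0)]; split; solve_hs.
    * exists [:: (p - 5, p - 5); (4, 3); (0, 0)]; split; solve_hs.
Qed.

Local Open Scope ring_scope.

Lemma sum_perm_enum n (F : {perm 'I_n} -> algC) :
  \sum_(i < #|{perm 'I_n}|) F (enum_val i) = \sum_g F g.
Proof. by rewrite -(big_enum_val F). Qed.

Lemma transp_adjE n (g h : {perm 'I_n}) :
  transp_adj g h = ((g^-1 * h)%g \in transpositions n).
Proof.
apply/existsP/idP => [[s /andP[sT /eqP->]]|hT].
  by rewrite mulKg.
by exists (g^-1 * h)%g; rewrite hT mulKVg eqxx.
Qed.

Lemma transpV n (s : {perm 'I_n}) : (s^-1 \in transpositions n)%g = (s \in transpositions n).
Proof.
apply/idP/idP; rewrite !inE => /existsP[x /existsP[y /andP[xy /eqP e]]];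
  apply/existsP; exists x; apply/existsP; exists y; rewrite xy /=.
  by rewrite -[s]invgK e tpermV.
by rewrite e tpermV.
Qed.

Lemma eigen_of_fun n (F : {perm 'I_n} -> algC) c :
  (forall h, \sum_(s in transpositions n) F (h * s)%g = c * F h) ->
  (exists g, F g != 0) -> eigenvalue (transp_adjmx n) c.
Proof.
move=> HF [g0 Fg0]; apply/eigenvalueP.
exists (\row_i F (enum_val i)).
  apply/rowP => j; rewrite !mxE.
  under eq_bigr => i _ do rewrite !mxE.
  set h := enum_val j.
  rewrite (sum_perm_enum (fun g => F g * (transp_adj g h)%:R)).
  rewrite -HF.
  have E g : transp_adj g h = ((h^-1 * g)%g \in transpositions n).
    by rewrite transp_adjE -transpV invMg invgK.
  rewrite (eq_bigr (fun g => F g * ((h^-1 * g)%g \in transpositions n)%:R)); last first.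
    by move=> g _; rewrite E.
  rewrite (reindex_inj (mulgI h)) /=.
  rewrite [RHS]big_mkcond /=; apply: eq_big => // s _.
  rewrite mulKg; case: (s \in transpositions n); by rewrite ?mulr1 ?mulr0.
apply/eqP => /rowP/(_ (enum_rank g0)); rewrite !mxE enum_rankK => e.
by move: Fg0; rewrite e eqxx.
Qed.

Local Close Scope ring_scope.
Lemma ltn_sum_ind (k x : nat) : (x < k) = \sum_(j < k) (x == j) :> nat.
Proof.
elim: k => [|k IH]; first by rewrite big_ord0.
rewrite big_ord_recr /= -IH ltnS leq_eqVlt.
by case: ltngtP.
Qed.

Lemma pair_count n (r c : 'I_n -> nat) :
  (forall x y, r x = r y -> c x = c y -> x = y) ->
  (forall x j, j <= c x -> exists y, r y = r x /\ c y = j) ->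
  \sum_a \sum_b ((a != b) && (r a == r b)) = 2 * \sum_a c a.
Proof.
move=> inj dn.
have split a b : ((a != b) && (r a == r b)) =
   ((r a == r b) && (c b < c a)) + ((r b == r a) && (c a < c b)) :> nat.
  case: (eqVneq a b) => [->|ab] /=; first by rewrite ltnn andbF.
  case: (eqVneq (r a) (r b)) => [e|ne] //=.
  case: (ltngtP (c b) (c a)) => // ce.
  by case/eqP: ab; apply: inj.
have cnt a : \sum_b ((r a == r b) && (c b < c a)) = c a.
  under eq_bigr => b _ do rewrite -mulnb (ltn_sum_ind (c a)) big_distrr /=.
  rewrite exchange_big /=.
  rewrite -[RHS]card_ord -sum1_card; apply: eq_bigr => j _.
  have [y [ry cy]] := dn a j (ltnW (ltn_ord j)).
  rewrite (bigD1 y) //= ry cy !eqxx big1 //.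
  move=> b yb; case: (eqVneq (r a) (r b)) => [e|]; last by rewrite mul0n.
  case: (eqVneq (c b) j) => [e2|]; last by rewrite muln0.
  by exfalso; move/eqP: yb; apply; apply: inj; [rewrite ry e | rewrite cy e2].
under eq_bigr do under eq_bigr do rewrite split.
under eq_bigr do rewrite big_split /=.
rewrite big_split /= [X in _ + X]exchange_big /= mul2n -addnn.
by congr (_ + _); apply: eq_bigr => a _; rewrite cnt.
Qed.

Local Open Scope ring_scope.

Section Comb.
Variable n : nat.
Variables row col : 'I_n -> nat.
Hypothesis rc_inj : forall x y, row x = row y -> col x = col y -> x = y.
Hypothesis down : forall x i j, (i <= row x)%N -> (j <= col x)%N ->
  exists y, row y = i /\ col y = j.

Definition cellb i c := [exists z, (row z == i) && (col z == c)].

Variable h : {perm 'I_n}.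
Hypothesis Hh : forall x y, row x = row y -> col (h x) = col (h y) -> x = y.

Lemma row_surj k : (forall x, row x = k -> cellb k (col (h x))) ->
  forall y, row y = k -> exists2 x, row x = k & col (h x) = col y.
Proof.
move=> Pk y ry.
pose g x := odflt x [pick z | (row z == row x) && (col z == col (h x))].
have gP x : row x = k -> row (g x) = row x /\ col (g x) = col (h x).
  move=> rx; rewrite /g; case: pickP => [z /andP[/eqP-> /eqP->] //|none].
  have := Pk x rx; rewrite /cellb => /existsP[z]; rewrite -rx.
  by rewrite none.
pose A := [set x | row x == k].
have gA : {in A &, injective g}.
  move=> x1 x2; rewrite !inE => /eqP r1 /eqP r2 e.
  have [a1 b1] := gP _ r1; have [a2 b2] := gP _ r2.
  apply: Hh; first by rewrite r1 r2.
  by rewrite -b1 -b2 e.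
have sub : [set g x | x in A] \subset A.
  apply/subsetP=> z /imsetP[x]; rewrite inE => /eqP rx ->; rewrite inE.
  by have [-> _] := gP _ rx; rewrite rx.
have /(subset_cardP (card_in_imset gA)) eqA := sub.
have : y \in A by rewrite inE ry.
rewrite -eqA => /imsetP[x]; rewrite inE => /eqP rx ->.
by exists x => //; have [_ ->] := gP _ rx.
Qed.

Lemma comb x : cellb (row x) (col (h x)).
Proof.
suff: forall i x, row x = i -> cellb i (col (h x)) by move=> /(_ _ x erefl).
clear x.
move=> i; elim/ltn_ind: i => i IH x0 rx0.
apply: contraT => /negP Hno.
set c := col (h x0) in Hno.
pose Ycol := [set y | col y == c].
pose Xc := [set x | col (h x) == c].
have Ylt y : y \in Ycol -> (row y < i)%N.
  rewrite inE => /eqP cy; rewrite ltnNge; apply/negP => le.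
  have [z [rz cz]] : exists z, row z = i /\ col z = c by apply: (down le); rewrite cy.
  by apply: Hno; apply/existsP; exists z; rewrite rz cz !eqxx.
have FP y : y \in Ycol -> exists2 x, row x = row y & col (h x) = col y.
  move=> Yy; apply: (row_surj (k := row y)) => //.
  by move=> x rx; apply: (IH (row y)) => //; exact: Ylt.
pose F y := odflt y [pick x | (row x == row y) && (col (h x) == col y)].
have FP' y : y \in Ycol -> row (F y) = row y /\ col (h (F y)) = col y.
  move=> Yy; rewrite /F; case: pickP => [z /andP[/eqP-> /eqP->] //|none].
  by have [x r1 c1] := FP y Yy; move: (none x); rewrite r1 c1 !eqxx.
have Finj : {in Ycol &, injective F}.
  move=> y1 y2 Y1 Y2 e.
  have [a1 b1] := FP' _ Y1; have [a2 b2] := FP' _ Y2.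
  apply: rc_inj; first by rewrite -a1 -a2 e.
  by move: Y1 Y2; rewrite !inE => /eqP-> /eqP->.
have sub : [set F y | y in Ycol] \subset Xc :\ x0.
  apply/subsetP => z /imsetP[y Yy ->]; have [a1 b1] := FP' _ Yy.
  rewrite !inE b1; move: (Yy); rewrite inE => ->; rewrite andbT.
  apply/eqP => e; have := Ylt _ Yy; by rewrite -a1 e rx0 ltnn.
have cXY : #|Xc| = #|Ycol|.
  rewrite -(card_imset _ (@perm_inj _ h)); apply: eq_card => y.
  rewrite inE; apply/imsetP/idP => [[x]|cy]; first by rewrite inE => ? ->.
  by exists (h^-1 y)%g; rewrite ?inE permKV.
have x0X : x0 \in Xc by rewrite inE.
have := subset_leq_card sub; rewrite (card_in_imset Finj).
move: (cardsD1 x0 Xc); rewrite x0X cXY add1n => ->; by rewrite ltnn.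
Qed.
End Comb.

Section Young.
Variable n : nat.
Variables row col : 'I_n -> nat.
Hypothesis rc_inj : forall x y, row x = row y -> col x = col y -> x = y.

Definition inR (p : {perm 'I_n}) := [forall x, row (p x) == row x].
Definition inC (q : {perm 'I_n}) := [forall x, col (q x) == col x].
Definition sgn (q : {perm 'I_n}) : algC := (-1) ^+ odd_perm q.
Definition yf (g : {perm 'I_n}) : algC :=
  \sum_(q | inC q) sgn q * (inR (g * q^-1)%g)%:R.

Lemma inRP (p : {perm 'I_n}) : reflect (forall x, row (p x) = row x) (inR p).
Proof. by apply: (iffP forallP) => H x; apply/eqP. Qed.
Lemma inCP (p : {perm 'I_n}) : reflect (forall x, col (p x) = col x) (inC p).
Proof. by apply: (iffP forallP) => H x; apply/eqP. Qed.

Lemma inRM (p q : {perm 'I_n}) : inR p -> inR q -> inR (p * q)%g.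
Proof. by move=> /inRP hp /inRP hq; apply/inRP => x; rewrite permM hq hp. Qed.
Lemma inRV (p : {perm 'I_n}) : inR p -> inR p^-1%g.
Proof. by move=> /inRP hp; apply/inRP => x; rewrite -{2}(permKV p x) hp. Qed.
Lemma inCM (p q : {perm 'I_n}) : inC p -> inC q -> inC (p * q)%g.
Proof. by move=> /inCP hp /inCP hq; apply/inCP => x; rewrite permM hq hp. Qed.
Lemma inCV (p : {perm 'I_n}) : inC p -> inC p^-1%g.
Proof. by move=> /inCP hp; apply/inCP => x; rewrite -{2}(permKV p x) hp. Qed.

Lemma inR_mull (p g : {perm 'I_n}) : inR p -> inR (p * g)%g = inR g.
Proof.
move=> hp; apply/idP/idP => [h|]; last exact: inRM.
by rewrite -(mulKg p g); apply: inRM => //; apply: inRV.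
Qed.
Lemma inC_mulr (p g : {perm 'I_n}) : inC p -> inC (g * p)%g = inC g.
Proof.
move=> hp; apply/idP/idP => [h|]; last by move=> ?; apply: inCM.
by rewrite -(mulgK p g); apply: inCM => //; apply: inCV.
Qed.

Lemma sgnM (p q : {perm 'I_n}) : sgn (p * q)%g = sgn p * sgn q.
Proof. by rewrite /sgn odd_permM signr_addb. Qed.

Lemma yf_inv (p0 q0 g : {perm 'I_n}) : inR p0 -> inC q0 -> yf (p0 * g * q0)%g = sgn q0 * yf g.
Proof.
move=> hp hq; rewrite /yf (reindex_inj (mulIg q0)) /= mulr_sumr.
apply: eq_big => [q|q _]; first by rewrite inC_mulr.
rewrite sgnM invMg !mulgA mulgK -mulgA (inR_mull _ hp).
by rewrite mulrAC mulrC.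
Qed.


Lemma inR1 : inR 1%g. Proof. by apply/inRP => x; rewrite perm1. Qed.
Lemma inC1 : inC 1%g. Proof. by apply/inCP => x; rewrite perm1. Qed.
Lemma sgn1 : sgn 1%g = 1. Proof. by rewrite /sgn odd_perm1. Qed.
Lemma sgn_tperm (a b : 'I_n) : a != b -> sgn (tperm a b) = -1.
Proof. by move=> ab; rewrite /sgn odd_tperm ab expr1. Qed.

Lemma inT_tperm (a b : 'I_n) : a != b -> tperm a b \in transpositions n.
Proof.
by move=> ab; rewrite inE; apply/existsP; exists a; apply/existsP; exists b; rewrite ab eqxx.
Qed.

Lemma inTP (s : {perm 'I_n}) :
  reflect (exists a b, a != b /\ s = tperm a b) (s \in transpositions n).
Proof.
rewrite inE; apply: (iffP existsP) => [[a /existsP[b /andP[ab /eqP e]]]|[a [b [ab e]]]].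
  by exists a, b.
by exists a; apply/existsP; exists b; rewrite ab e eqxx.
Qed.

Lemma inT_conj (s a : {perm 'I_n}) :
  ((s ^ a)%g \in transpositions n) = (s \in transpositions n).
Proof.
apply/idP/idP => /inTP[x [y [xy e]]]; last first.
  by rewrite e tpermJ; apply: inT_tperm; rewrite (inj_eq perm_inj).
have -> : s = (tperm x y ^ a^-1)%g by rewrite -e conjgK.
by rewrite tpermJ; apply: inT_tperm; rewrite (inj_eq perm_inj).
Qed.

Lemma sumT_conj (a : {perm 'I_n}) (F : {perm 'I_n} -> algC) :
  \sum_(s in transpositions n) F (s ^ a)%g = \sum_(s in transpositions n) F s.
Proof.
rewrite [RHS](reindex_inj (conjg_inj a)) /=; apply: eq_bigl => s.
by rewrite inT_conj.
Qed.

Definition cT := \sum_(s in transpositions n) yf s.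
Definition w g := \sum_(s in transpositions n) yf (g * s)%g - cT * yf g.

Lemma w_inv (p0 q0 g : {perm 'I_n}) : inR p0 -> inC q0 -> w (p0 * g * q0)%g = sgn q0 * w g.
Proof.
move=> hp hq; rewrite /w mulrBr yf_inv // mulrCA; congr (_ - _).
rewrite -(sumT_conj q0^-1 (fun s => yf (g * s)%g)) mulr_sumr; apply: eq_bigr => s _.
rewrite -(yf_inv _ hp hq); congr yf.
by rewrite -!mulgA invgK mulVg mulg1.
Qed.

Lemma yf_one : yf 1%g = 1.
Proof.
rewrite /yf (bigD1 1%g) ?inC1 //= invg1 mul1g inR1 sgn1 mulr1 big1 ?addr0 //.
move=> q /andP[qC q1]; rewrite mul1g; case hR: (inR q^-1%g); last by rewrite mulr0.
exfalso; move/eqP: q1; apply.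
have /inRP r := hR; have /inCP c := inCV qC.
apply/permP => x; rewrite perm1; apply: (@perm_inj _ q^-1%g).
by rewrite permK; apply: rc_inj; rewrite ?r ?c.
Qed.

Lemma w1 : w 1%g = 0.
Proof.
rewrite /w yf_one mulr1; under eq_bigr do rewrite mul1g.
by apply/eqP; rewrite subr_eq0; apply/eqP; reflexivity.
Qed.

Lemma w_case1 (h : {perm 'I_n}) (x y : 'I_n) :
  x != y -> row x = row y -> col (h x) = col (h y) -> w h = 0.
Proof.
move=> xy rxy chy.
have tR : inR (tperm x y) by apply/inRP => z; case: tpermP => // ->.
have tC : inC (tperm (h x) (h y)) by apply/inCP => z; case: tpermP => // ->.
have e : (tperm x y * h = h * tperm (h x) (h y))%g by rewrite conjgC tpermJ.
have e1 := w_inv h tR inC1; rewrite mulg1 sgn1 mul1r e in e1.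
have e2 := w_inv h inR1 tC; rewrite mul1g sgn_tperm ?(inj_eq perm_inj) // in e2.
have : w h *+ 2 == 0 by rewrite mulr2n -{1}e1 e2 mulN1r addNr.
by rewrite mulrn_eq0 /= => /eqP.
Qed.


Hypothesis down : forall x i j, (i <= row x)%N -> (j <= col x)%N ->
  exists y, row y = i /\ col y = j.

Lemma w_case2 (h : {perm 'I_n}) :
  (forall x y, row x = row y -> col (h x) = col (h y) -> x = y) -> w h = 0.
Proof.
move=> Hh.
pose phi x := odflt x [pick z | (row z == row x) && (col z == col (h x))].
have phiP x : row (phi x) = row x /\ col (phi x) = col (h x).
  rewrite /phi; case: pickP => [z /andP[/eqP-> /eqP->] //|none].
  have /existsP[z] := comb rc_inj down Hh x.
  by rewrite none.
have phi_inj : injective phi.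
  move=> x1 x2 e; have [a1 b1] := phiP x1; have [a2 b2] := phiP x2.
  by apply: Hh; rewrite -?a1 -?a2 -?b1 -?b2 e.
pose P := perm phi_inj.
have PR : inR P by apply/inRP => x; rewrite permE; case: (phiP x).
have qC : inC (P^-1 * h)%g.
  apply/inCP => z; rewrite permM; have [_ <-] := phiP ((P^-1)%g z).
  by rewrite -(permE phi_inj) permKV.
have -> : h = (P * 1 * (P^-1 * h))%g by rewrite mulg1 mulKVg.
by rewrite w_inv // w1 mulr0.
Qed.

Lemma yf_eigen h : \sum_(s in transpositions n) yf (h * s)%g = cT * yf h.
Proof.
apply/eqP; rewrite -subr_eq0; apply/eqP.
case: (boolP [exists x, exists y, (x != y) && (row x == row y) && (col (h x) == col (h y))]).
  move=> /existsP[x /existsP[y /andP[/andP[xy /eqP r] /eqP c]]]; exact: (w_case1 xy r c).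
move=> /negP N; apply: w_case2 => x y r c; apply/eqP; apply: contraT => xy; exfalso; apply: N.
by apply/existsP; exists x; apply/existsP; exists y; rewrite xy r c !eqxx.
Qed.

Lemma eig_cT : eigenvalue (transp_adjmx n) cT.
Proof.
apply: (@eigen_of_fun n yf) => //; first exact: yf_eigen.
by exists 1%g; rewrite yf_one oner_neq0.
Qed.


Lemma inR_tperm (a b : 'I_n) : a != b -> inR (tperm a b) = (row a == row b).
Proof.
move=> ab; apply/inRP/eqP => [H|e z]; first by rewrite -[in LHS](H a) tpermL.
by case: tpermP => // ->.
Qed.
Lemma inC_tperm (a b : 'I_n) : a != b -> inC (tperm a b) = (col a == col b).
Proof.
move=> ab; apply/inCP/eqP => [H|e z]; first by rewrite -[in LHS](H a) tpermL.
by case: tpermP => // ->.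
Qed.

Lemma tperm_only (a b : 'I_n) (q : {perm 'I_n}) : a != b -> inC q ->
  inR (tperm a b * q^-1)%g -> q = 1%g \/ q = tperm a b.
Proof.
move=> ab /inCP qC /inRP rR.
have key z : z != a -> z != b -> q z = z.
  move=> za zb.
  have tz : tperm a b z = z by apply: tpermD; rewrite eq_sym.
  have e : q ((tperm a b * q^-1)%g z) = z by rewrite permM permKV.
  have ez : (tperm a b * q^-1)%g z = z.
    apply: rc_inj; first exact: rR.
    by rewrite -qC e.
  by rewrite -{1}ez e.
have qx x : x = a \/ x = b -> q x = a \/ q x = b.
  move=> hx; case: (eqVneq (q x) a) => [->|qa]; first by left.
  case: (eqVneq (q x) b) => [->|qb]; first by right.
  have /perm_inj e := key _ qa qb; rewrite e in qa qb.
  by case: hx => hx; rewrite hx eqxx in qa qb.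
case: (qx a (or_introl erefl)) => [qa|qa]; [left|right]; apply/permP => z.
  rewrite perm1; case: (eqVneq z a) => [->//|za]; case: (eqVneq z b) => [->|zb]; last exact: key.
  case: (qx b (or_intror erefl)) => // qb; by move: ab; rewrite (perm_inj (etrans qb (esym qa))) eqxx.
case: (qx b (or_intror erefl)) => qb; last by move: ab; rewrite (perm_inj (etrans qa (esym qb))) eqxx.
by case: tpermP => [->|->|/eqP za /eqP zb] //; exact: key.
Qed.

Lemma yf_tperm (a b : 'I_n) : a != b ->
  yf (tperm a b) = (row a == row b)%:R - (col a == col b)%:R.
Proof.
move=> ab; rewrite /yf big_mkcond (bigD1 1%g) //= (bigD1 (tperm a b)) /=; last first.
  by apply/eqP => /permP/(_ a); rewrite perm1 tpermL => e; move: ab; rewrite e eqxx.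
rewrite big1 ?addr0; last first.
  move=> q /andP[q1 qt]; case: ifP => // qC; case hR: inR; last by rewrite mulr0.
  by case: (tperm_only ab qC hR) => e; [move: q1|move: qt]; rewrite e eqxx.
rewrite inC1 invg1 mulg1 sgn1 mul1r inR_tperm // inC_tperm // mulgV inR1 mulr1.
by case: (col a == col b); rewrite ?sgn_tperm // ?subr0 ?addr0.
Qed.

Lemma tperm_pairs (a b x y : 'I_n) : x != y ->
  ((a != b) && (tperm a b == tperm x y)) = ((a, b) == (x, y)) || ((a, b) == (y, x)).
Proof.
move=> xy; apply/idP/idP.
  move=> /andP[ab /eqP e]; have := congr1 (fun p : {perm 'I_n} => p a) e.
  rewrite tpermL; case: tpermP => [->->|->->|ax ay ba]; rewrite ?eqxx ?orbT //.
  by move: ab; rewrite ba eqxx.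
case/orP => /eqP[-> ->]; first by rewrite xy eqxx.
by rewrite eq_sym xy tpermC eqxx.
Qed.

Lemma sumT_pairs (G : {perm 'I_n} -> algC) :
  \sum_(ab : 'I_n * 'I_n | ab.1 != ab.2) G (tperm ab.1 ab.2) =
  2%:R * \sum_(s in transpositions n) G s.
Proof.
rewrite (partition_big (fun ab => tperm ab.1 ab.2) (mem (transpositions n))) /=;
  last by move=> ab ab12; apply: inT_tperm.
rewrite mulr_sumr; apply: eq_bigr => s sT.
rewrite (eq_bigr (fun _ => G s)); last by move=> ab /andP[_ /eqP ->].
rewrite sumr_const mulr_natl; congr (_ *+ _).
have /inTP[x [y [xy ->]]] := sT.
rewrite (eq_card (B := pred2 (x, y) (y, x))) ?card2; last first.
  by case=> a b; rewrite !inE /= -tperm_pairs.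
by rewrite xpair_eqE (negbTE xy).
Qed.

Lemma pairs_nat (r : 'I_n -> nat) :
  \sum_(ab : 'I_n * 'I_n | ab.1 != ab.2) (r ab.1 == r ab.2)%:R =
  (\sum_a \sum_b ((a != b) && (r a == r b)))%:R :> algC.
Proof.
rewrite natr_sum; under [RHS]eq_bigr do rewrite natr_sum.
rewrite pair_big /= big_mkcond; apply: eq_bigr => p _.
by case: (p.1 != p.2).
Qed.

Lemma cT_formula : cT = (\sum_a col a)%:R - (\sum_a row a)%:R.
Proof.
apply: (@mulfI _ 2%:R); first by rewrite pnatr_eq0.
rewrite /cT -sumT_pairs.
rewrite (eq_bigr (fun ab => (row ab.1 == row ab.2)%:R - (col ab.1 == col ab.2)%:R));
  last by move=> ab ab12; rewrite yf_tperm.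
rewrite sumrB !pairs_nat.
rewrite (pair_count rc_inj); last first.
  by move=> x j hj; apply: down.
rewrite (@pair_count n col row); first last.
- move=> x i hi; have [y [a b]] := down hi (leqnn (col x)); by exists y.
- by move=> x y a b; apply: rc_inj.
by rewrite mulrBr !natrM.
Qed.

Lemma eig_shape : eigenvalue (transp_adjmx n) ((\sum_a col a)%:R - (\sum_a row a)%:R).
Proof. by rewrite -cT_formula; apply: eig_cT. Qed.
End Young.

Lemma sum_iota_nat m : \sum_(j <- iota 0 m) j = 'C(m, 2).
Proof.
elim: m => [|m IH]; first by rewrite big_nil.
have -> : iota 0 m.+1 = iota 0 m ++ [:: m] by rewrite -addn1 iotaD.
by rewrite big_cat big_seq1 IH binS bin1.
Qed.


Lemma Posz_sum (I : Type) (r : seq I) (F : I -> nat) :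
  (\sum_(i <- r) F i)%N%:Z = \sum_(i <- r) (F i)%:Z.
Proof.
by rewrite -natz natr_sum; apply: eq_bigr => i _; rewrite natz.
Qed.

Lemma cont_arm i a : \sum_(p <- arm i a) ((p.2)%:Z - (p.1)%:Z) = ('C(a.+1, 2))%:Z.
Proof.
rewrite /arm big_map -sum_iota_nat Posz_sum; apply: eq_bigr => j _ /=.
by lia.
Qed.

Lemma cont_leg i b : \sum_(p <- leg i b) ((p.2)%:Z - (p.1)%:Z) = - ('C(b.+1, 2))%:Z.
Proof.
rewrite /leg big_map.
have -> : 'C(b.+1, 2) = (\sum_(k <- iota 0 b) k.+1)%N.
  elim: b => [|b IH]; first by rewrite big_nil.
  have -> : iota 0 b.+1 = iota 0 b ++ [:: b] by rewrite -addn1 iotaD.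
  by rewrite big_cat big_seq1 -IH binS bin1.
rewrite Posz_sum -sumrN; apply: eq_bigr => k _ /=.
by lia.
Qed.

Lemma cont_cells i hs : \sum_(p <- cells_from i hs) ((p.2)%:Z - (p.1)%:Z) = fcont hs.
Proof.
elim: hs i => [|h t IH] i; first by rewrite big_nil.
by rewrite cells_cons !big_cat cont_arm cont_leg IH /= addrA.
Qed.

Lemma bound_int (n : nat) (z : int) :
  z%:~R <= ((n%:R - 4) / 2 : algC) -> (z * 2 + 4 <= n%:Z)%R.
Proof.
rewrite ler_pdivlMr ?ltr0n // => h.
rewrite -(ler_int algC) intrD intrM.
change (z%:~R * 2 + 4 <= (n%:R : algC)).
by rewrite -lerBrDr.
Qed.


Lemma sum_nth_ord (D : seq (nat * nat)) (F : nat * nat -> nat) :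
  (\sum_(x < size D) F (nth (0,0) D x) = \sum_(p <- D) F p)%N.
Proof. by rewrite (big_nth (0,0)) big_mkord. Qed.

Lemma eig_hooks n hs : decr hs -> fsize hs = n ->
  eigenvalue (transp_adjmx n) ((fcont hs)%:~R : algC).
Proof.
move=> d <-; rewrite -(size_cells 0 hs) -(cont_cells 0 hs).
set D := cells_from 0 hs.
pose row (x : 'I_(size D)) := (nth (0,0) D x).1.
pose col (x : 'I_(size D)) := (nth (0,0) D x).2.
have inj : forall x y, row x = row y -> col x = col y -> x = y.
  move=> x y r c; apply: val_inj; apply/eqP.
  rewrite -(nth_uniq (0,0) (ltn_ord x) (ltn_ord y) (uniq_cells 0 hs)); apply/eqP.
  move: r c; rewrite /row /col.
  by case: (nth _ _ x) => ? ?; case: (nth _ _ y) => ? ? /= -> ->.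
have down : forall x i j, (i <= row x)%N -> (j <= col x)%N ->
    exists y, row y = i /\ col y = j.
  move=> x i j hi hj.
  have mx : (row x, col x) \in D by rewrite /row /col -surjective_pairing mem_nth.
  have mij := cells_down d mx hi hj.
  exists (Ordinal (etrans (index_mem (i, j) D) mij)).
  by rewrite /row /col /= nth_index.
have := eig_shape inj down.
congr eigenvalue.
rewrite sumrB intrB -!Posz_sum.
by rewrite /row /col !(sum_nth_ord D (fun p => p.2)) !(sum_nth_ord D (fun p => p.1)).
Qed.

Definition swaph (hs : seq (nat * nat)) := [seq (h.2, h.1) | h <- hs].

Lemma decr_sorted hs :
  decr hs = sorted (fun a b : nat * nat => (b.1 < a.1)%N && (b.2 < a.2)%N) hs.
Proof.
elim: hs => [|h t IH] //; case: t IH => [|h2 t] IH //.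
have -> : decr [:: h, h2 & t] = [&& (h2.1 < h.1)%N, (h2.2 < h.2)%N & decr (h2 :: t)] by [].
by rewrite IH /= andbA.
Qed.

Lemma decr_swap hs : decr (swaph hs) = decr hs.
Proof.
rewrite !decr_sorted /swaph sorted_map; case: hs => // h t /=.
by apply: eq_path => a b /=; rewrite andbC.
Qed.

Lemma fsize_swap hs : fsize (swaph hs) = fsize hs.
Proof. by elim: hs => [|h t IH] //=; rewrite IH; lia. Qed.

Lemma fcont_swap hs : fcont (swaph hs) = - fcont hs.
Proof. by elim: hs => [|h t IH] //=; rewrite IH; lia. Qed.

Theorem theorem3 (n : nat) (hn : (19 <= n)%N) (m : int) :
  - ((n%:R - 4) / 2) <= (m%:~R : algC) <= (n%:R - 4) / 2 ->
  eigenvalue (transp_adjmx n) (m%:~R : algC).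
Proof.
move=> /andP[lo hi].
have h1 := bound_int hi.
have h2 : ((- m) * 2 + 4 <= n%:Z)%R by apply: bound_int; rewrite intrN lerNl.
case: m lo hi h1 h2 => k _ _ h1 h2.
  have [hs [d s c]] := exists_hooks_nat hn (ltac:(lia) : (2 * k + 4 <= n)%N).
  by rewrite -c; apply: eig_hooks.
have [hs [d s c]] := exists_hooks_nat hn (ltac:(rewrite NegzE in h2; lia) : (2 * k.+1 + 4 <= n)%N).
have -> : Negz k = fcont (swaph hs) by rewrite fcont_swap c NegzE.
by apply: eig_hooks; rewrite ?decr_swap ?fsize_swap.
Qed.
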